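(* Consider a controlled Markov chain with finite state space $X$, finite action set $U$, unknown transition probabilities $p$ and rewards $r(x,u)\in(0,1]$, controlled by the RBMLE algorithm described in the context. For an episode $k$ and $\pi\in\Pi_{sd}$, let \[ \theta_{k,\pi}\in\arg\max_{\theta\in\Theta}\Big\{\alpha(\tau_k)J(\theta,\pi)-\sum_{(x,u)}n_k(x,u)KL(\hat p_k(x,u),\theta(x,u))\Big\}. \] Then \[ |\theta_{k,\pi}(x,y,u)-\hat p_k(x,y,u)|\le d_2(x,u;\tau_k)\quad\forall (x,y,u)\in X\times X\times U, \] where $d_2(x,u;t):=\sqrt{\frac{\alpha(t)}{2n(x,u;t)}}$.
   Context: $\Pi_{sd}$ denotes the stationary deterministic policies $X\to U$. For a transition kernel $\theta$ and policy $\pi$, $J(\theta,\pi)$ is the long-term average reward $\liminf_T\frac1T\mathbb{E}\sum_{t=1}^Tr(x(t),u(t))$ under $\theta$ and $\pi$. $\Theta$ is the set of $\theta\in[0,1]^{|X|\times|X|\times|U|}$ with $\theta(x,y,u)=0$ whenever $p(x,y,u)=0$ (known zero pattern) and $\sum_y\theta(x,y,u)=1$; $\theta(x,u)=\{\theta(x,y,u)\}_{y}$. $KL(p_1,p_2)=\sum_xp_1(x)\log\frac{p_1(x)}{p_2(x)}$. $n(x,u;t)$ is the number of times action $u$ was applied in state $x$ up to time $t$, $n(x,y,u;t)$ the number of those followed by a move to $y$, $\hat p(x,y,u;t)=\frac{n(x,y,u;t)}{n(x,u;t)\vee1}$. Episodes $\mathcal{E}_k=[\tau_k,\tau_{k+1}-1]$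 with $|\mathcal{E}_k|=2^k$; $n_k=n(\cdot;\tau_k)$, $\hat p_k=\hat p(\tau_k)$; $\alpha(t)=a\log(t^b|X|^2|U|)$ with constants $a>0$, $b>2$. RBMLE: index $I_k(\pi)=\max_{\theta\in\Theta}\{\alpha(\tau_k)J(\theta,\pi)-\sum_{(x,u)}n_k(x,u)KL(\hat p_k(x,u),\theta(x,u))\}$, and during episode $k$ the policy $\pi_k\in\arg\max_{\pi\in\Pi_{sd}}I_k(\pi)$ is applied. *)

(* Defs.v *)
From HB Require Import structures.
From mathcomp Require Import all_boot all_order all_algebra.
From mathcomp Require Import all_classical all_reals.
From mathcomp Require Import ereal sequences exp.
Set Implicit Arguments. Unset Strict Implicit. Unset Printing Implicit Defensive.
Import Order.TTheory GRing.Theory Num.Theory.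
Local Open Scope ring_scope.

Definition kernel (R : realType) (X U : finType) := X -> X -> U -> R.

Definition Theta (R : realType) (X U : finType) (p : kernel R X U) :
  set (kernel R X U) :=
  [set th | (forall x y u, 0 <= th x y u <= 1)
          /\ (forall x y u, p x y u = 0 -> th x y u = 0)
          /\ (forall x u, \sum_(y : X) th x y u = 1)].

Definition KL (R : realType) (X : finType) (p1 p2 : X -> R) : \bar R :=
  if [exists y, (0 < p1 y) && (p2 y == 0)] then +oo%E
  else (\sum_(y : X) (if p1 y == 0 then 0 else p1 y * ln (p1 y / p2 y)))%:E.

(* Distribution of the state at time t+1 under theta, policy pi, start x0
   (time 1 corresponds to index 0). *)
Fixpoint state_dist (R : realType) (X U : finType) (th : kernel R X U)
  (pi : X -> U) (x0 : X) (t : nat) : X -> R :=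
  match t with
  | 0 => fun y => if y == x0 then 1 else 0
  | t'.+1 => fun y => \sum_(x : X) state_dist th pi x0 t' x * th x y (pi x)
  end.

Definition avg_reward (R : realType) (X U : finType) (r : X -> U -> R)
  (th : kernel R X U) (pi : X -> U) (x0 : X) (T : nat) : R :=
  (T%:R)^-1 * \sum_(0 <= t < T) \sum_(y : X) state_dist th pi x0 t y * r y (pi y).

Definition J (R : realType) (X U : finType) (r : X -> U -> R)
  (x0 : X) (th : kernel R X U) (pi : X -> U) : R :=
  limn_inf (avg_reward r th pi x0).

Definition cnt (X U : finType) (xs : nat -> X) (us : nat -> U)
  (x : X) (u : U) (t : nat) : nat :=
  \sum_(1 <= s < t) ((xs s == x) && (us s == u)).

Definition cnt3 (X U : finType) (xs : nat -> X) (us : nat -> U)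
  (x y : X) (u : U) (t : nat) : nat :=
  \sum_(1 <= s < t) [&& xs s == x, us s == u & xs s.+1 == y].

Definition phat (R : realType) (X U : finType) (xs : nat -> X) (us : nat -> U)
  (t : nat) : kernel R X U :=
  fun x y u => (cnt3 xs us x y u t)%:R / (maxn (cnt xs us x u t) 1)%:R.

(* Episodes: |E_k| = 2^k starting at tau_0 = 1, so tau_k = 2^k. *)
Definition tau (k : nat) : nat := 2 ^ k.

Definition alpha (R : realType) (X U : finType) (a b : R) (t : nat) : R :=
  a * ln ((t%:R) `^ b * (#|X|%:R) ^+ 2 * #|U|%:R).

Definition rbmle_obj (R : realType) (X U : finType) (a b : R) (r : X -> U -> R)
  (x0 : X) (xs : nat -> X) (us : nat -> U) (k : nat)
  (pi : X -> U) (th : kernel R X U) : \bar R :=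
  ((alpha X U a b (tau k) * J r x0 th pi)%:E
   - \sum_(xu : X * U)
       ((cnt xs us xu.1 xu.2 (tau k))%:R%:E
        * KL (fun y => phat R xs us (tau k) xu.1 y xu.2) (fun y => th xu.1 y xu.2)))%E.

Definition rbmle_index (R : realType) (X U : finType) (p : kernel R X U)
  (a b : R) (r : X -> U -> R) (x0 : X) (xs : nat -> X) (us : nat -> U)
  (k : nat) (pi : X -> U) : \bar R :=
  ereal_sup [set rbmle_obj a b r x0 xs us k pi th | th in Theta p].

(* Main.v *)
Require Import Defs.
From HB Require Import structures.
From mathcomp Require Import all_boot all_order all_algebra.
From mathcomp Require Import all_classical all_reals.
From mathcomp Require Import ereal sequences exp.
From mathcomp Require Import topology normedtype derive realfun.
From mathcomp Require Import ring lra.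
Import Order.TTheory GRing.Theory Num.Theory.
Import numFieldNormedType.Exports.
Local Open Scope ring_scope.
Section Bin.
Variable R : realType.

Definition Gf (a s : R) : R := - (a * ln s) - (1 - a) * ln (1 - s) - 2 * (a - s) ^+ 2.

Lemma gder (a t : R) : 0 < t < 1 ->
  is_derive t 1 (Gf a) ((t - a) * (1 - 2 * t) ^+ 2 / (t * (1 - t))).
Proof.
move=> /andP[t0 t1].
have h1 : is_derive t 1 (@ln R) t^-1 by apply: is_derive1_ln.
have h3 : is_derive t 1 (cst 1 - id : R -> R) (0 - 1) by apply: is_deriveB.
have h2 : is_derive t 1 (@ln R \o (cst 1 - id)) ((1 - t)^-1 * (0 - 1)).
  apply: is_derive1_comp => //.
  apply: is_derive1_ln => /=; by rewrite subr_gt0.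
have h4 : is_derive t 1 ((cst a - id) ^+ 2 : R -> R) ((2%:R * (a - t) ^+ 1) *: (0 - 1)).
  apply: is_deriveX.
have := is_deriveB (is_deriveB (is_deriveN (is_deriveZ a h1)) (is_deriveZ (1 - a) h2)) (is_deriveZ 2 h4).
move=> H.
have -> : Gf a = 
   (- (a *: @ln R) - ((1 - a) *: (@ln R \o (cst 1 - id))) - 2 *: ((cst a - id) ^+ 2 : R -> R)).
  by apply/funext => s /=.
apply: is_derive_eq H _.
rewrite /= expr1 -[in LHS]mulNr.
by rewrite /GRing.scale /=; field; rewrite ?subr_eq0 (gt_eqF t0) (gt_eqF t1).
Qed.

Lemma Gcont (a b c : R) : 0 < b -> c < 1 -> ({within `[b, c], continuous (Gf a)})%classic.
Proof.
move=> b0 c1; apply: derivable_within_continuous => t; rewrite in_itv /= => /andP[bt tc].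
have := @gder a t; rewrite (lt_le_trans b0 bt) (le_lt_trans tc c1) => /(_ isT) H.
exact: ex_derive.
Qed.

Lemma Gmono (a b : R) : 0 < a < 1 -> 0 < b < 1 -> Gf a a <= Gf a b.
Proof.
move=> /andP[a0 a1] /andP[b0 b1].
have [ab|ba] := leP a b.
- apply: (@ger0_derive1_le_cc R (Gf a) a b) => //.
  + move=> t; rewrite in_itv /= => /andP[xa tb].
    have := @gder a t; rewrite (lt_trans a0 xa) (lt_trans tb b1) => /(_ isT) H.
    exact: ex_derive.
  + move=> t; rewrite in_itv /= => /andP[xa tb].
    have := @gder a t; rewrite (lt_trans a0 xa) (lt_trans tb b1) => /(_ isT) H.
    rewrite derive1E derive_val.
    apply: divr_ge0; last by apply: mulr_ge0; lra.
    apply: mulr_ge0; [lra| exact: sqr_ge0].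
  + exact: Gcont.
  + by rewrite in_itv /= lexx ab.
  + by rewrite in_itv /= lexx ab.
- apply: (@ler0_derive1_le_cc R (Gf a) b a) => //.
  + move=> t; rewrite in_itv /= => /andP[bt ta].
    have := @gder a t; rewrite (lt_trans b0 bt) (lt_trans ta a1) => /(_ isT) H.
    exact: ex_derive.
  + move=> t; rewrite in_itv /= => /andP[bt ta].
    have := @gder a t; rewrite (lt_trans b0 bt) (lt_trans ta a1) => /(_ isT) H.
    rewrite derive1E derive_val.
    rewrite mulr_le0_ge0 //; last by rewrite invr_ge0; apply: mulr_ge0; lra.
    rewrite mulr_le0_ge0 //; [lra| exact: sqr_ge0].
  + exact: Gcont.
  + by rewrite in_itv /= lexx (ltW ba).
  + by rewrite in_itv /= lexx (ltW ba).
  + exact: ltW.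
Qed.

Lemma G1E : Gf 1 = (fun s => - ln s - 2 * (1 - s) ^+ 2).
Proof. by apply/funext => s; rewrite /Gf subrr mul0r subr0 mul1r. Qed.

Lemma G1der (t : R) : 0 < t -> derivable (Gf 1) t 1.
Proof.
move=> t0; rewrite G1E.
have h1 : is_derive t 1 (@ln R) t^-1 by apply: is_derive1_ln.
have h4 : is_derive t 1 ((cst 1 - id) ^+ 2 : R -> R) ((2%:R * (1 - t) ^+ 1) *: (0 - 1)).
  by apply: is_deriveX.
have H := is_deriveB (is_deriveN h1) (is_deriveZ 2 h4).
have -> : (fun s => - ln s - 2 * (1 - s) ^+ 2) = (- @ln R - 2 *: ((cst 1 - id) ^+ 2 : R -> R)).
  by apply/funext => s /=.
exact: ex_derive.
Qed.

Lemma Gmono1 (b : R) : 0 < b < 1 -> Gf 1 1 <= Gf 1 b.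
Proof.
move=> /andP[b0 b1].
apply: (@ler0_derive1_le_cc R (Gf 1) b 1) => //.
+ move=> t; rewrite in_itv /= => /andP[bt ta].
  have := @gder 1 t; rewrite (lt_trans b0 bt) ta => /(_ isT) H.
  exact: ex_derive.
+ move=> t; rewrite in_itv /= => /andP[bt ta].
  have := @gder 1 t; rewrite (lt_trans b0 bt) ta => /(_ isT) H.
  rewrite derive1E derive_val.
  rewrite mulr_le0_ge0 //; last by rewrite invr_ge0; apply: mulr_ge0; lra.
  rewrite mulr_le0_ge0 //; [lra| exact: sqr_ge0].
+ apply: derivable_within_continuous => t; rewrite in_itv /= => /andP[bt _].
  apply: G1der; exact: lt_le_trans bt.
+ by rewrite in_itv /= lexx (ltW b1).
+ by rewrite in_itv /= lexx (ltW b1).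
+ exact: ltW.
Qed.

Lemma xlnE (a b : R) : 0 <= a -> 0 < b -> a * ln (a / b) = a * ln a - a * ln b.
Proof.
rewrite le_eqVlt => /predU1P[<-|a0] b0; first by rewrite !mul0r subrr.
by rewrite ln_div ?mulrBr // posrE.
Qed.

Lemma binP (a b : R) : 0 <= a <= 1 -> 0 < b < 1 ->
  2 * (a - b) ^+ 2 <= a * ln (a / b) + (1 - a) * ln ((1 - a) / (1 - b)).
Proof.
move=> /andP[a0 a1] /andP[b0 b1].
rewrite !xlnE //; try lra.
suff : Gf a a <= Gf a b by rewrite /Gf subrr expr0n /= mulr0 subr0; lra.
have [a_0|a_pos] := eqVneq a 0.
  subst a.
  have E : forall s, Gf 0 s = Gf 1 (1 - s).
    by move=> s; rewrite /Gf !subrr !mul0r !subr0 mul1r oppr0 sub0r; congr (_ - _); congr (_ * _); ring.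
  rewrite !E subr0; apply: Gmono1; lra.
have [a_1|a_lt1] := eqVneq a 1.
  by subst a; apply: Gmono1; lra.
apply: Gmono; last by rewrite b0 b1.
by rewrite lt_neqAle eq_sym a_pos a0 lt_neqAle a_lt1 a1.
Qed.

Lemma kterm_ge (p q c : R) : 0 <= p -> 0 <= q -> (0 < p -> 0 < q) -> 0 < c ->
  p * ln c + p - q * c <= p * ln (p / q).
Proof.
move=> p0 q0 pq c0; have [->|pp] := eqVneq p 0.
  by rewrite !mul0r add0r sub0r oppr_le0; apply: mulr_ge0 => //; exact: ltW.
have pg : 0 < p by rewrite lt_neqAle eq_sym pp.
have qg := pq pg.
have z0 : 0 < q * c / p by apply: divr_gt0 => //; exact: mulr_gt0.
have hl : ln (q * c / p) <= q * c / p - 1.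
  have := @le_ln1Dx R (q * c / p - 1).
  have -> : 1 + (q * c / p - 1) = q * c / p by ring.
  apply; lra.
have hm : p * ln (q * c / p) <= q * c - p.
  have -> : q * c - p = p * (q * c / p - 1) by field; rewrite pp.
  by rewrite ler_wpM2l.
have e1 : ln (q * c / p) = ln q + ln c - ln p.
  by rewrite ln_div ?lnM // posrE // mulr_gt0.
have e2 : ln (p / q) = ln p - ln q by rewrite ln_div.
rewrite e2; rewrite e1 in hm; lra.
Qed.

Lemma multiP (X : finType) (P Q : X -> R) :
  (forall y, 0 <= P y) -> (forall y, 0 <= Q y) ->
  \sum_y P y = 1 -> \sum_y Q y = 1 -> (forall y, 0 < P y -> 0 < Q y) ->
  forall y0, 2 * (P y0 - Q y0) ^+ 2 <= \sum_y P y * ln (P y / Q y).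
Proof.
move=> P0 Q0 P1 Q1 PQ y0.
rewrite (bigD1 y0) //=.
rewrite (bigD1 y0) //= in P1; rewrite (bigD1 y0) //= in Q1.
set a := P y0 in P1 *; set b := Q y0 in Q1 *.
set PB := \sum_(y | y != y0) P y in P1.
set QB := \sum_(y | y != y0) Q y in Q1.
have PB0 : 0 <= PB by apply: sumr_ge0.
have QB0 : 0 <= QB by apply: sumr_ge0.
have a0 : 0 <= a := P0 y0. have b0 : 0 <= b := Q0 y0.
have [a1|a1] := eqVneq a 1.
  have PB_0 : PB = 0 by lra.
  have Pz := psumr_eq0P (fun i _ => P0 i) PB_0.
  rewrite big1; last by move=> y /Pz ->; rewrite mul0r.
  have bpos : 0 < b by apply: PQ; rewrite -/a a1 ltr01.
  rewrite a1 addr0.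
  have [b1|b1] := eqVneq b 1.
    by rewrite b1 subrr expr0n /= mulr0 mul1r divr1 ln1.
  have := @binP 1 b; rewrite lexx ler01 bpos /=.
  have -> : b < 1 by rewrite lt_neqAle b1 /=; lra.
  by move=> /(_ isT isT); rewrite subrr mul0r addr0.
have QBpos : 0 < QB.
  rewrite lt_neqAle QB0 andbT; apply/eqP => QB_0.
  have Qz := psumr_eq0P (fun i _ => Q0 i) (esym QB_0).
  have PB_0 : PB = 0.
    apply: big1 => y yy0; apply/eqP; rewrite eq_le P0 andbT.
    rewrite leNgt; apply/negP => /PQ; by rewrite Qz // ltxx.
  by move: a1; apply/negP; rewrite negbK; apply/eqP; lra.
have PBpos : 0 < PB.
  rewrite lt_neqAle PB0 andbT; apply/eqP => PB_0.
  by move: a1; apply/negP; rewrite negbK; apply/eqP; lra.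
have c0 : 0 < PB / QB by apply: divr_gt0.
have rest : PB * ln (PB / QB) <= \sum_(y | y != y0) P y * ln (P y / Q y).
  have H : forall y, y != y0 -> P y * ln (PB / QB) + P y - Q y * (PB / QB) <= P y * ln (P y / Q y).
    by move=> y _; apply: kterm_ge => //; apply: PQ.
  apply: le_trans (ler_sum _ H).
  rewrite big_split /= big_split /= sumrN -!mulr_suml -/PB -/QB.
  rewrite [QB * _]mulrC divfK ?addrK //; by rewrite gt_eqF.
have ePB : PB = 1 - a by lra.
have eQB : QB = 1 - b by lra.
have [b_0|b_pos] := eqVneq b 0.
  have a_0 : a = 0.
    apply/eqP; rewrite eq_le a0 andbT leNgt; apply/negP => /PQ.
    by rewrite -/b b_0 ltxx.
  move: rest; rewrite ePB eQB a_0 b_0 !subr0 divr1 ln1 mulr0 mul0r add0r.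
  by rewrite expr0n /= mulr0.
have bp : 0 < b by rewrite lt_neqAle eq_sym b_pos.
have := @binP a b; rewrite a0 bp /=.
have -> : a <= 1 by lra.
have -> : b < 1 by lra.
move=> /(_ isT isT) h; apply: le_trans h _.
by rewrite lerD2l -ePB -eQB.
Qed.
End Bin.

Lemma KL_cases (R : realType) (X : finType) (P Q : X -> R) :
  (forall y, 0 <= P y) -> (forall y, 0 <= Q y) ->
  \sum_y P y = 1 -> \sum_y Q y = 1 ->
  KL P Q = +oo%E \/ exists k, KL P Q = k%:E /\ forall y0, 2 * (P y0 - Q y0) ^+ 2 <= k.
Proof.
move=> P0 Q0 P1 Q1; rewrite /KL; case: ifP => h; [by left | right].
eexists; split; first reflexivity.
move=> y0.
have -> : \sum_y (if P y == 0 then 0 else P y * ln (P y / Q y)) = \sum_y P y * ln (P y / Q y).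
  by apply: eq_bigr => y _; case: eqP => // ->; rewrite mul0r.
apply: multiP => // y Py.
have /existsPn /(_ y) := negbT h; rewrite Py /= => /negP hq.
by rewrite lt_neqAle eq_sym Q0 andbT; apply/negP.
Qed.

Lemma KL_ge0 (R : realType) (X : finType) (P Q : X -> R) (y0 : X) :
  (forall y, 0 <= P y) -> (forall y, 0 <= Q y) ->
  \sum_y P y = 1 -> \sum_y Q y = 1 -> (0 <= KL P Q)%E.
Proof.
move=> P0 Q0 P1 Q1; case: (@KL_cases R X P Q P0 Q0 P1 Q1) => [->//|[k [-> hk]]].
by rewrite lee_fin; apply: le_trans (hk y0); apply: mulr_ge0 => //; apply: sqr_ge0.
Qed.

Lemma limninf_bound (R : realType) (u : R^nat) : (forall n, 0 <= u n <= 1) ->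
  0 <= limn_inf u <= 1.
Proof.
move=> h.
have ub : has_ubound (range u) by exists 1 => _ [n _ <-]; case/andP: (h n).
have lb : has_lbound (range u) by exists 0 => _ [n _ <-]; case/andP: (h n).
have cv := cvg_infs_sup ub lb.
have -> : limn_inf u = sup (range (infs u)) by exact: cvg_lim cv.
have inf0 n : 0 <= infs u n.
  rewrite /infs /=; apply: lb_le_inf; first by exists (u n); exists n => /=.
  by move=> _ [m _ <-]; case/andP: (h m).
have inf1 n : infs u n <= 1.
  rewrite /infs /=; apply: le_trans (_ : u n <= 1); last by case/andP: (h n).
  by apply: ge_inf; [exact: has_lbound_sdrop | exists n => /=].
have ubi : has_ubound (range (infs u)) by exists 1 => _ [n _ <-].
apply/andP; split.
  apply: le_trans (inf0 0%N) _; apply: ub_le_sup => //; by exists 0%N.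
by apply: ge_sup; [exists (infs u 0%N); exists 0%N | move=> _ [n _ <-]].
Qed.

Lemma sd_prob (R : realType) (X U : finType) (th : kernel R X U) pi x0 :
  (forall x y u, 0 <= th x y u) -> (forall x u, \sum_y th x y u = 1) ->
  forall t, (forall y, 0 <= state_dist th pi x0 t y) /\ \sum_y state_dist th pi x0 t y = 1.
Proof.
move=> h0 h1; elim=> [|t [IH0 IH1]] /=.
  split; first by move=> y; case: eqP.
  by rewrite -big_mkcond /= big_pred1_eq.
split; first by move=> y; apply: sumr_ge0 => x _; apply: mulr_ge0.
rewrite exchange_big /= -IH1; apply: eq_bigr => x _.
by rewrite -mulr_sumr h1 mulr1.
Qed.

Lemma avg_bound (R : realType) (X U : finType) (r : X -> U -> R) (th : kernel R X U) pi x0 :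
  (forall x u, 0 < r x u <= 1) ->
  (forall x y u, 0 <= th x y u) -> (forall x u, \sum_y th x y u = 1) ->
  forall T, 0 <= avg_reward r th pi x0 T <= 1.
Proof.
move=> hr h0 h1 T; rewrite /avg_reward.
have hs t : 0 <= \sum_y state_dist th pi x0 t y * r y (pi y) <= 1.
  have [d0 d1] := @sd_prob R X U th pi x0 h0 h1 t.
  apply/andP; split.
    by apply: sumr_ge0 => y _; apply: mulr_ge0 => //; case/andP: (hr y (pi y)) => /ltW.
  rewrite -d1; apply: ler_sum => y _; rewrite ler_piMr //.
  by case/andP: (hr y (pi y)).
have S0 : 0 <= \sum_(0 <= t < T) \sum_y state_dist th pi x0 t y * r y (pi y).
  by apply: sumr_ge0 => t _; case/andP: (hs t).
have S1 : \sum_(0 <= t < T) \sum_y state_dist th pi x0 t y * r y (pi y) <= T%:R.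
  apply: le_trans (_ : \sum_(0 <= t < T) (1 : R) <= _).
    by apply: ler_sum => t _; case/andP: (hs t).
  by rewrite sumr_const_nat subn0.
apply/andP; split; first by apply: mulr_ge0; rewrite ?invr_ge0.
case: T S1 {S0} => [|T] S1; first by rewrite invr0 mul0r.
by rewrite ler_pdivrMl ?ltr0n // mulr1.
Qed.

Lemma J_bound (R : realType) (X U : finType) (r : X -> U -> R) x0 (th : kernel R X U) pi :
  (forall x u, 0 < r x u <= 1) ->
  (forall x y u, 0 <= th x y u) -> (forall x u, \sum_y th x y u = 1) ->
  0 <= J r x0 th pi <= 1.
Proof. by move=> hr h0 h1; apply: limninf_bound => T; apply: avg_bound. Qed.

Lemma alpha_ge0 (R : realType) (X U : finType) (a b : R) (k : nat) (x : X) (u : U) :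
  0 < a -> 2 < b -> 0 <= alpha X U a b (tau k).
Proof.
move=> a0 b2; rewrite /alpha; apply: mulr_ge0; first exact: ltW.
apply: ln_ge0.
have h1 : 1 <= ((tau k)%:R : R) `^ b.
  rewrite -{1}(powRr0 ((tau k)%:R : R)); apply: (ler_powR (a := (tau k)%:R)); last lra.
  by rewrite /tau ler1n expn_gt0.
have hX : (1 : R) <= #|X|%:R by rewrite ler1n; apply/card_gt0P; exists x.
have hU : (1 : R) <= #|U|%:R by rewrite ler1n; apply/card_gt0P; exists u.
set A := ((tau k)%:R : R) `^ b in h1 *.
set B := (#|X|%:R : R) in hX *. set C := (#|U|%:R : R) in hU *.
have h2 : 1 <= B * B by nra.
have h3 : 1 <= A * (B * B) by nra.
rewrite expr2 mulrA; nra.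
Qed.

Section Counts.
Variables (X U : finType) (xs : nat -> X) (us : nat -> U).

Lemma sum_cnt3 x u t : (\sum_y cnt3 xs us x y u t)%N = cnt xs us x u t.
Proof.
rewrite /cnt3 /cnt exchange_big /=; apply: eq_bigr => s _.
case: (xs s == x); case: (us s == u) => /=; try by rewrite big1.
rewrite (bigD1 (xs s.+1)) //= eqxx big1 // => y.
by rewrite eq_sym => /negbTE ->.
Qed.

Lemma cnt3_le x y u t : (cnt3 xs us x y u t <= cnt xs us x u t)%N.
Proof.
rewrite /cnt3 /cnt; apply: leq_sum => s _.
by case: (xs s == x); case: (us s == u) => //=; case: (xs s.+1 == y).
Qed.
End Counts.

Lemma ThetaP (R : realType) (X U : finType) (p th : kernel R X U) :
  th \in Theta p <-> Theta p th.
Proof. by rewrite inE. Qed.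

Section Phat.
Variables (R : realType) (X U : finType) (xs : nat -> X) (us : nat -> U).

Lemma phat_ge0 t x y u : 0 <= phat R xs us t x y u.
Proof. by rewrite /phat divr_ge0. Qed.

Lemma phat_le1 t x y u : 0 <= phat R xs us t x y u <= 1.
Proof.
rewrite phat_ge0 /= /phat ler_pdivrMr ?ltr0n ?leq_max ?orbT // mul1r ler_nat.
by apply: leq_trans (leq_maxl _ 1); exact: cnt3_le.
Qed.

Lemma phat_sum t x u : (0 < cnt xs us x u t)%N -> \sum_y phat R xs us t x y u = 1.
Proof.
move=> n0; rewrite /phat -mulr_suml -natr_sum sum_cnt3.
by rewrite (maxn_idPl n0) divff // pnatr_eq0 -lt0n.
Qed.

Lemma phat_zero (p : kernel R X U) t x y u :
  (forall s, (1 <= s)%N -> 0 < p (xs s) (xs s.+1) (us s)) ->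
  p x y u = 0 -> phat R xs us t x y u = 0.
Proof.
move=> hp pz; rewrite /phat /cnt3 big_nat big1 ?mul0r // => s /andP[s1 _].
case: (boolP [&& _, _ & _]) => // /and3P[/eqP e1 /eqP e2 /eqP e3].
by have := hp s s1; rewrite e1 e2 e3 pz ltxx.
Qed.
End Phat.

Theorem lemma2 (R : realType) (X U : finType)
  (p : kernel R X U) (r : X -> U -> R) (a b : R)
  (xs : nat -> X) (us : nat -> U) (pol : nat -> X -> U) :
  (* p is a transition kernel *)
  p \in Theta p ->
  (* rewards in (0,1] *)
  (forall x u, 0 < r x u <= 1) ->
  (* constants of alpha *)
  0 < a -> 2 < b ->
  (* the sample path only makes transitions of positive probability *)
  (forall t, (1 <= t)%N -> 0 < p (xs t) (xs t.+1) (us t)) ->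
  (* RBMLE: during episode j the policy pol j, a maximizer of I_j, is applied *)
  (forall j, forall pi' : X -> U,
      (rbmle_index p a b r (xs 1%N) xs us j pi'
         <= rbmle_index p a b r (xs 1%N) xs us j (pol j))%E) ->
  (forall j t, (tau j <= t < tau j.+1)%N -> us t = pol j (xs t)) ->
  forall (k : nat) (pi : X -> U) (th : kernel R X U),
    th \in Theta p ->
    (forall th', th' \in Theta p ->
       (rbmle_obj a b r (xs 1%N) xs us k pi th'
          <= rbmle_obj a b r (xs 1%N) xs us k pi th)%E) ->
    forall x y u, (0 < cnt xs us x u (tau k))%N ->
      `| th x y u - phat R xs us (tau k) x y u |
        <= Num.sqrt (alpha X U a b (tau k) / (2 * (cnt xs us x u (tau k))%:R)).
Proof.
move=> _ hr a0 b2 hp _ _ k pi th /ThetaP [th01 [thz th1]] thmax x y u npos.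
have th0 x' y' u' : 0 <= th x' y' u' by case/andP: (th01 x' y' u').
set t := tau k.
pose thp : kernel R X U := fun x' y' u' =>
  if (0 < cnt xs us x' u' t)%N then phat R xs us t x' y' u' else th x' y' u'.
have thp01 x' y' u' : 0 <= thp x' y' u' <= 1.
  by rewrite /thp; case: ifP => _; [exact: phat_le1 | exact: th01].
have thp0 x' y' u' : 0 <= thp x' y' u' by case/andP: (thp01 x' y' u').
have thp1 x' u' : \sum_y' thp x' y' u' = 1.
  rewrite /thp; case: (ltnP 0 (cnt xs us x' u' t)) => h; last exact: th1.
  exact: phat_sum.
have thpT : thp \in Theta p.
  apply/ThetaP; split => //; split => // x' y' u' pz.
  rewrite /thp; case: ifP => _; [exact: (@phat_zero R X U xs us p t x' y' u' hp pz) | exact: thz].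
have := thmax thp thpT.
have objp : rbmle_obj a b r (xs 1%N) xs us k pi thp
    = (alpha X U a b (tau k) * J r (xs 1%N) thp pi)%:E.
  rewrite /rbmle_obj big1 ?sube0 // => [[x' u']] _ /=.
  case: (posnP (cnt xs us x' u' (tau k))) => [->|hpos]; first by rewrite mul0e.
  rewrite /KL /thp hpos.
  have -> : [exists y', (0 < phat R xs us (tau k) x' y' u') && (phat R xs us (tau k) x' y' u' == 0)] = false.
    apply/negbTE; apply/existsPn => y'; apply/negP => /andP[h /eqP e].
    by rewrite e ltxx in h.
  rewrite big1 ?mule0 // => y' _; case: eqP => // /eqP hne.
  by rewrite divff // ln1 mulr0.
rewrite objp /rbmle_obj => hobj.
set al := alpha X U a b (tau k).
have al0 : 0 <= al by apply: alpha_ge0.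
have /andP[J0 J1] := @J_bound R X U r (xs 1%N) th pi hr th0 th1.
have /andP[Jp0 Jp1] := @J_bound R X U r (xs 1%N) thp pi hr thp0 thp1.
set S := (\sum_xu _)%E in hobj.
have term_ge0 : forall xu : X * U, (0 <= (cnt xs us xu.1 xu.2 (tau k))%:R%:E *
     KL (fun y' => phat R xs us (tau k) xu.1 y' xu.2) (fun y' => th xu.1 y' xu.2))%E.
  move=> [x' u'] /=; case: (posnP (cnt xs us x' u' (tau k))) => [->|hpos].
    by rewrite mul0e.
  apply: mule_ge0; first by rewrite lee_fin.
  apply: (@KL_ge0 R X _ _ y) => //; [move=> y'; exact: phat_ge0 | exact: phat_sum].
have Sge : ((cnt xs us x u (tau k))%:R%:E *
     KL (fun y' => phat R xs us (tau k) x y' u) (fun y' => th x y' u) <= S)%E.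
  rewrite /S (bigD1 (x, u)) //=; apply: leeDl; apply: sume_ge0 => xu _.
  exact: term_ge0.
clearbody S.
have nR : (0 : R) < (cnt xs us x u (tau k))%:R by rewrite ltr0n.
have P0 y' : 0 <= phat R xs us (tau k) x y' u by exact: phat_ge0.
have P1 : \sum_y' phat R xs us (tau k) x y' u = 1 by exact: phat_sum.
case: (@KL_cases R X _ _ P0 (fun y' => th0 x y' u) P1 (th1 x u)) => [Hinf|[kk [Hk hk]]].
  rewrite Hinf gt0_muley ?lte_fin // in Sge.
  by move: Sge hobj; case: S.
rewrite Hk -EFinM in Sge.
move: Sge hobj; case: S => [s| |] //=; rewrite !lee_fin => Sge hobj.
have hal : al * J r (xs 1%N) th pi <= al by rewrite ler_piMr.
have hal2 : 0 <= al * J r (xs 1%N) thp pi by rewrite mulr_ge0.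
have nk : (cnt xs us x u (tau k))%:R * kk <= al by rewrite -/al in hobj; lra.
have hy := hk y.
rewrite -sqrtr_sqr ler_sqrt; last by rewrite divr_ge0 // mulr_ge0 // ltW.
rewrite ler_pdivlMr; last by rewrite mulr_gt0.
set d := th x y u - _.
have -> : d ^+ 2 = (phat R xs us (tau k) x y u - th x y u) ^+ 2 by rewrite /d -sqrrN opprB.
set n := ((cnt xs us x u (tau k))%:R : R) in nR nk *.
set e := (phat R xs us (tau k) x y u - th x y u) ^+ 2 in hy *.
nra.
Qed.
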